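(* Let $\mathscr{A}$ be a $C^*$-algebra, let $\delta,\varepsilon\in(0,1)$, let $\mathscr{E}$ and $\mathscr{F}$ be inner product $\mathscr{A}$-modules, and let $T:\mathscr{E}\to\mathscr{F}$ be a nonzero linear mapping such that for some real number $\gamma$ with $[T]\leq\gamma\leq\|T\|$, $$\sqrt{\tfrac{\delta}{\varepsilon}}\,\gamma^2\|\langle x,y\rangle\|\leq\|\langle Tx,Ty\rangle\|\leq\sqrt{\tfrac{\varepsilon}{\delta}}\,\gamma^2\|\langle x,y\rangle\|\qquad(x,y\in\mathscr{E}).$$ Then $T$ is a $(\delta,\varepsilon)$-orthogonality preserving mapping.
   Context: An inner product $\mathscr{A}$-module is a right $\mathscr{A}$-module $\mathscr{E}$ with an $\mathscr{A}$-valued inner product $\langle\cdot,\cdot\rangle$, $\mathbb{C}$-linear and $\mathscr{A}$-linear in the second variable, with $\langle x,y\rangle^*=\langle y,x\rangle$, $\langle x,x\rangle\geq0$ and $\langle x,x\rangle=0$ iff $x=0$; the norm is $\|x\|=\|\langle x,x\rangle\|^{1/2}$. The minimum modulus of a linear map $T$ is $[T]=\inf\{\|Tx\|:\|x\|=1\}$. A mapping $T:\mathscr{E}\to\mathscr{F}$ is $(\delta,\varepsilon)$-orthogonality preserving if for all $x,y\in\mathscr{E}$, $\|\langle x,y\rangle\|\leq\delta\|x\|\,\|y\|$ implies $\|\langle Tx,Ty\rangle\|\leq\varepsilon\|Tx\|\,\|Ty\|$. *)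

(* Defs.v *)
From HB Require Import structures.
From mathcomp Require Import all_boot all_order all_algebra.
From mathcomp Require Import complex.
From mathcomp Require Import all_classical all_reals ereal.
Set Implicit Arguments. Unset Strict Implicit. Unset Printing Implicit Defensive.
Import Order.TTheory GRing.Theory Num.Theory.
Local Open Scope ring_scope.

Definition cabs (R : realType) (c : R[i]) : R :=
  let: Complex a b := c in Num.sqrt (a ^+ 2 + b ^+ 2).
Definition cconj (R : realType) (c : R[i]) : R[i] :=
  let: Complex a b := c in Complex a (- b).

Section Defs.
Variables (R : realType) (A : lmodType R[i]).
Variables (mul : A -> A -> A) (star : A -> A) (nrm : A -> R).

Record is_cstar_algebra : Prop := {
  cs_mulA : forall a b c, mul a (mul b c) = mul (mul a b) c;
  cs_mulDl : forall a b c, mul (a + b) c = mul a c + mul b c;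
  cs_mulDr : forall a b c, mul a (b + c) = mul a b + mul a c;
  cs_mulZl : forall (l : R[i]) a b, mul (l *: a) b = l *: mul a b;
  cs_mulZr : forall (l : R[i]) a b, mul a (l *: b) = l *: mul a b;
  cs_starD : forall a b, star (a + b) = star a + star b;
  cs_starZ : forall (l : R[i]) a, star (l *: a) = cconj l *: star a;
  cs_starM : forall a b, star (mul a b) = mul (star b) (star a);
  cs_starK : forall a, star (star a) = a;
  cs_nrm_eq0 : forall a, nrm a = 0 -> a = 0;
  cs_nrmD : forall a b, nrm (a + b) <= nrm a + nrm b;
  cs_nrmZ : forall (l : R[i]) a, nrm (l *: a) = cabs l * nrm a;
  cs_nrmM : forall a b, nrm (mul a b) <= nrm a * nrm b;
  cs_cstar : forall a, nrm (mul (star a) a) = nrm a ^+ 2;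
  cs_complete : forall u : nat -> A,
    (forall e : R, 0 < e -> exists N : nat, forall m n : nat,
        (N <= m)%N -> (N <= n)%N -> nrm (u m - u n) < e) ->
    exists l : A, forall e : R, 0 < e -> exists N : nat, forall n : nat,
        (N <= n)%N -> nrm (u n - l) < e
}.

Definition cs_pos (a : A) : Prop := exists b, a = mul (star b) b.

Record is_ip_module (E : lmodType R[i]) (act : E -> A -> E) (ip : E -> E -> A)
  : Prop := {
  im_actM : forall x a b, act x (mul a b) = act (act x a) b;
  im_actDl : forall x y a, act (x + y) a = act x a + act y a;
  im_actDr : forall x a b, act x (a + b) = act x a + act x b;
  im_actZl : forall (l : R[i]) x a, act (l *: x) a = l *: act x a;
  im_actZr : forall (l : R[i]) x a, act x (l *: a) = l *: act x a;
  im_ipD : forall x y z, ip x (y + z) = ip x y + ip x z;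
  im_ipZ : forall (l : R[i]) x y, ip x (l *: y) = l *: ip x y;
  im_ipA : forall x y a, ip x (act y a) = mul (ip x y) a;
  im_ipstar : forall x y, star (ip x y) = ip y x;
  im_ip_pos : forall x, cs_pos (ip x x);
  im_ip_eq0 : forall x, ip x x = 0 -> x = 0
}.

Definition mnorm (E : lmodType R[i]) (ip : E -> E -> A) (x : E) : R :=
  Num.sqrt (nrm (ip x x)).

Definition op_norm (E F : lmodType R[i]) (ipE : E -> E -> A) (ipF : F -> F -> A)
  (T : E -> F) : \bar R :=
  ereal_sup [set ((mnorm ipF (T x))%:E) | x in [set x | mnorm ipE x = 1]]%classic.
Definition min_modulus (E F : lmodType R[i]) (ipE : E -> E -> A) (ipF : F -> F -> A)
  (T : E -> F) : \bar R :=
  ereal_inf [set ((mnorm ipF (T x))%:E) | x in [set x | mnorm ipE x = 1]]%classic.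

Definition de_orth_preserving (E F : lmodType R[i]) (ipE : E -> E -> A)
  (ipF : F -> F -> A) (T : E -> F) (delta eps : R) : Prop :=
  forall x y : E, nrm (ipE x y) <= delta * mnorm ipE x * mnorm ipE y ->
    nrm (ipF (T x) (T y)) <= eps * mnorm ipF (T x) * mnorm ipF (T y).
End Defs.

(* Main.v *)
Require Import Defs.
From HB Require Import structures.
From mathcomp Require Import all_boot all_order all_algebra.
From mathcomp Require Import complex.
From mathcomp Require Import all_classical all_reals ereal.
From mathcomp Require Import ring lra.
Import Order.TTheory GRing.Theory Num.Theory.
Local Open Scope ring_scope.

Lemma nrm_ge0 (R : realType) (A : lmodType R[i])
  (mul : A -> A -> A) (star : A -> A) (nrm : A -> R)
  (hA : is_cstar_algebra mul star nrm) (a : A) : 0 <= nrm a.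
Proof.
have h0 : nrm 0 = 0.
  have := cs_nrmZ hA 0 0; rewrite scale0r => ->.
  by rewrite /cabs /= expr0n /= addr0 sqrtr0 mul0r.
have hN : nrm (- a) = nrm a.
  have := cs_nrmZ hA (-1) a; rewrite scaleN1r => ->.
  rewrite /cabs /=.
  have -> : ((-1 : R) ^+ 2 + (- 0) ^+ 2) = 1 by rewrite oppr0 expr0n /= addr0 sqrrN expr1n.
  by rewrite sqrtr1 mul1r.
have := cs_nrmD hA a (- a); rewrite subrr h0 hN => H; lra.
Qed.

Theorem corollary2p2 (R : realType) (A : lmodType R[i])
  (mul : A -> A -> A) (star : A -> A) (nrm : A -> R)
  (hA : is_cstar_algebra mul star nrm)
  (delta eps : R) (hd : 0 < delta < 1) (he : 0 < eps < 1)
  (E F : lmodType R[i])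
  (actE : E -> A -> E) (ipE : E -> E -> A) (hE : is_ip_module mul star actE ipE)
  (actF : F -> A -> F) (ipF : F -> F -> A) (hF : is_ip_module mul star actF ipF)
  (T : {linear E -> F}) (hT : exists x : E, T x <> 0)
  (gamma : R)
  (hg1 : (min_modulus nrm ipE ipF T <= gamma%:E)%E)
  (hg2 : (gamma%:E <= op_norm nrm ipE ipF T)%E)
  (hineq : forall x y : E,
     Num.sqrt (delta / eps) * gamma ^+ 2 * nrm (ipE x y) <= nrm (ipF (T x) (T y))
     /\ nrm (ipF (T x) (T y)) <= Num.sqrt (eps / delta) * gamma ^+ 2 * nrm (ipE x y)) :
  de_orth_preserving nrm ipE ipF T delta eps.
Proof.
clear hg1 hg2 hT; move=> x y Hxy; rewrite /mnorm in Hxy *.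
case/andP: hd => d0 _; case/andP: he => e0 _.
set s := Num.sqrt (delta / eps); set t := Num.sqrt (eps / delta).
set c := gamma ^+ 2.
have s0 : 0 <= s by apply: sqrtr_ge0.
have t0 : 0 <= t by apply: sqrtr_ge0.
have c0 : 0 <= c by rewrite /c sqr_ge0.
have sc0 : 0 <= s * c by apply: mulr_ge0.
set k := Num.sqrt (s * c).
have k0 : 0 <= k by apply: sqrtr_ge0.
have kk : k * k = s * c by rewrite -expr2 sqr_sqrtr.
have key : forall z : E, k * Num.sqrt (nrm (ipE z z)) <= Num.sqrt (nrm (ipF (T z) (T z))).
  move=> z; rewrite -sqrtrM //; apply: ler_wsqrtr.
  by case: (hineq z z).
have ts : t * delta = eps * s.
  apply/eqP; rewrite -(eqrXn2 (n:=2)) //; last by apply: mulr_ge0 => //; lra.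
  2: by apply: mulr_ge0 => //; lra.
  rewrite !exprMn /t /s !sqr_sqrtr; last 2 first.
  - by apply: divr_ge0; lra.
  - by apply: divr_ge0; lra.
  apply/eqP; field; apply/andP; split; apply/negP=> /eqP H; lra.
set u := Num.sqrt (nrm (ipE x x)); set v := Num.sqrt (nrm (ipE y y)).
have u0 : 0 <= u by apply: sqrtr_ge0.
have v0 : 0 <= v by apply: sqrtr_ge0.
have kx := key x; have ky := key y.
set U := Num.sqrt (nrm (ipF (T x) (T x))) in kx *.
set V := Num.sqrt (nrm (ipF (T y) (T y))) in ky *.
have [_ hP] := hineq x y.
have h1 : t * c * nrm (ipE x y) <= t * c * (delta * u * v).
  by apply: ler_wpM2l => //; apply: mulr_ge0.
have h2 : (k * u) * (k * v) <= U * V.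
  apply: ler_pM => //; apply: mulr_ge0 => //.
have h3 : t * c * (delta * u * v) = eps * ((k * u) * (k * v)).
  have -> : eps * ((k * u) * (k * v)) = eps * (k * k) * u * v by ring.
  rewrite kk. have -> : t * c * (delta * u * v) = (t * delta) * c * u * v by ring.
  rewrite ts; ring.
apply: (le_trans hP); apply: (le_trans h1); rewrite h3 -[eps * U * V]mulrA.
by apply: ler_wpM2l => //; lra.
Qed.
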